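(* Let $m\ge1$, let $S\le G_{m,m}$ be the stabilizer of $(0,0,\dots,0)\in H_{2m+1}$ under the right action $\pi$ described below, and let $\widehat K_m\to K_{m,m}$ be the finite covering space of the presentation complex $K_{m,m}$ corresponding to $S$. Then $\widehat K_m$ cellularly embeds into the $2$–skeleton of $\mathcal T_{2m+1}$.
   Context: $G_{m,m}=\langle a_1,\dots,a_{2m+1}\mid [a_i,a_{i+1}]=1\ (1\le i\le m),\ a_{m+j+1}^{-1}a_ja_{m+j+1}=a_{m+j}\ (1\le j\le m)\rangle$; $K_{m,m}$ is its presentation $2$–complex (one $0$–cell, $2m+1$ loops, $2m$ squares); $G_{m,k}$ denotes the subgroup generated by $a_1,\dots,a_{m+k+1}$. Let $H_n=\{0,1\}^n$, identified with a subset of $H_{n+1}$ by appending $0$; $H_n^*\subset H_{n+1}$ the tuples with last coordinate $1$. Let $\beta_i$ flip the $i$-th coordinate and $\varphi_{k,m+k}$ swap the $k$-th and $(m+k)$-th coordinates. The right action $\pi$ ($\pi(gh)=\pi(h)\pi(g)$) of $G_{m,m}$ on $H_{2m+1}$ is defined inductively: $\pi(a_i)=\beta_i$ on $H_{m+1}$ for $i\le m+1$; for $k=1,\dots,m$, $\pi(a_{m+k+1})=\beta_{m+k+1}$ on $H_{m+k+1}$ and, for $j\le m+k$, $\pi(a_j)|_{H^*_{m+k}}=\beta_{m+k+1}\circ\varphi_{k,m+k}\circ\pi(a_j)|_{H_{m+k}}\circ\varphi_{k,m+k}\circ\beta_{m+k+1}$; this is a well-defined transitive right action. $C_2=\mathbb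 R/2\mathbb Z$ has $0$–cells $0,1$ and $1$–cells $[0,1]$, $[1,2]$; $\mathcal T_n=(\mathbb R/2\mathbb Z)^n$ has the product CW (cube) structure, with $0$–skeleton $H_n$. *)

(* Defs.v *)
From mathcomp Require Import all_boot.
Set Implicit Arguments. Unset Strict Implicit. Unset Printing Implicit Defensive.

(* ---------- The right action pi of G_{m,m} on H_{2m+1}, on generators ----------
   Points are represented (auxiliarily) as x : nat -> bool, coordinate k (1-based)
   being x k; only coordinates 1..n matter at stage n. *)

Definition flipc (n : nat) (x : nat -> bool) : nat -> bool :=
  fun k => if k == n then ~~ x k else x k.

Definition swapc (a b : nat) (x : nat -> bool) : nat -> bool :=
  fun k => if k == a then x b else if k == b then x a else x k.

(* piH m i n x = pi(a_i)(x) for x in H_n (1-based generator index i), following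
   the inductive definition: on H_{m+1}, pi(a_i) = beta_i; at stage n = m+k+1,
   pi(a_n) = beta_n, and for i <= m+k, pi(a_i) is pi(a_i)|_{H_{m+k}} on points with
   last coordinate 0 and beta_n o phi_{k,m+k} o pi(a_i)|_{H_{m+k}} o phi_{k,m+k} o beta_n
   on points with last coordinate 1. *)
Fixpoint piH (m i n : nat) (x : nat -> bool) : nat -> bool :=
  match n with
  | 0 => flipc i x
  | n'.+1 =>
      if n <= m.+1 then flipc i x
      else if i == n then flipc n x
      else let k := n - m.+1 in
           if x n then flipc n (swapc k n' (piH m i n' (swapc k n' (flipc n x))))
           else piH m i n' x
  end.

(* H_{2m+1} = {0,1}^{2m+1}, coordinate k+1 of the paper = index k : 'I_(2m+1). *)
Definition Hpt (m : nat) := {ffun 'I_(2 * m).+1 -> bool}.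

Definition ext_pt m (x : Hpt m) : nat -> bool :=
  fun k => if k is k'.+1 then
             (if (insub k' : option 'I_(2 * m).+1) is Some o then x o else false)
           else false.

(* x . a_{i+1}  (right action by the generator with 0-based index i) *)
Definition act m (i : 'I_(2 * m).+1) (x : Hpt m) : Hpt m :=
  [ffun o : 'I_(2 * m).+1 => piH m i.+1 (2 * m).+1 (ext_pt x) o.+1].

Definition gen m (k : nat) : 'I_(2 * m).+1 := inord k.-1.

(* ---------- The covering complex \hat K_m (Schreier coset complex) ----------
   0-cells : points v of H_{2m+1}  (= cosets S\G via Sg |-> 0.g, the action being
             transitive);
   1-cells : pairs (v, i), the lift at v of the loop a_{i+1}, from v to v.a_{i+1};
   2-cells : pairs (v, r), the lift at v of the relator r.  Relators are indexed by
             r : bool * 'I_m with j := r.2 + 1: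
               (false, _) : [a_j, a_{j+1}],
               (true , _) : a_{m+j+1}^{-1} a_j a_{m+j+1} a_{m+j}^{-1}.
             Each relator has the form  a b (c d)^{-1}  (a b = c d in G); its lift
             at v is the square with boundary edges
             (v,a) (v.a,b) (v,c) (v.c,d). *)
Definition Kvert m := Hpt m.
Definition Kedge m := (Hpt m * 'I_(2 * m).+1)%type.
Definition Kface m := (Hpt m * (bool * 'I_m))%type.

Definition edge_src m (e : Kedge m) : Hpt m := e.1.
Definition edge_tgt m (e : Kedge m) : Hpt m := act e.2 e.1.

Definition rel_letters m (r : bool * 'I_m) :
  'I_(2 * m).+1 * 'I_(2 * m).+1 * 'I_(2 * m).+1 * 'I_(2 * m).+1 :=
  let j := (r.2).+1 in
  if r.1 then (gen m j, gen m (m + j + 1), gen m (m + j + 1), gen m (m + j))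
  else (gen m j, gen m j.+1, gen m j.+1, gen m j).

Definition face_boundary m (f : Kface m) : {set Kedge m} :=
  let: (v, r) := f in
  let: (a, b, c, d) := rel_letters r in
  [set (v, a); (act a v, b); (v, c); (act c v, d)].

(* ---------- The cube complex T_n = (R/2Z)^n (product CW structure) ----------
   Cells of C_2 = R/2Z: (false, b) = the 0-cell b (b = 0 or 1);
   (true, false) = the 1-cell [0,1], (true, true) = the 1-cell [1,2]. *)
Definition Tcell (n : nat) := {ffun 'I_n -> bool * bool}.

Definition cdim n (c : Tcell n) : nat := #|[set k | (c k).1]|.

(* d lies in the closure of c: coordinatewise equal, or c_k is a 1-cell and d_k a
   0-cell (both 0 and 1 are endpoints of each of [0,1], [1,2] in R/2Z). *)
Definition cface n (d c : Tcell n) : bool :=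
  [forall k, (d k == c k) || ((c k).1 && ~~ (d k).1)].

Definition cellular_embedding m
  (fV : Kvert m -> Tcell (2 * m).+1) (fE : Kedge m -> Tcell (2 * m).+1)
  (fF : Kface m -> Tcell (2 * m).+1) : Prop :=
  [/\ [/\ injective fV, injective fE & injective fF],
      [/\ (forall v, cdim (fV v) = 0), (forall e, cdim (fE e) = 1)
        & (forall f, cdim (fF f) = 2)],
      (forall e : Kedge m,
         ([set d | cface d (fE e) && (cdim d == 0)] = [set fV (edge_src e); fV (edge_tgt e)])) &
      (forall f : Kface m,
         [set d | cface d (fF f) && (cdim d == 1)] = fE @: face_boundary f)].

(* Main.v *)
Require Import Defs.
From mathcomp Require Import all_boot zify.

Definition sw (a b t : nat) : nat := if t == a then b else if t == b then a else t.

Fixpoint kap (m i n : nat) (x : nat -> bool) : nat :=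
  match n with
  | 0 => i
  | n'.+1 =>
      if n <= m.+1 then i
      else if i == n then n
      else let k := n - m.+1 in
           if x n then sw k n' (kap m i n' (swapc k n' (flipc n x)))
           else kap m i n' x
  end.

Lemma kap_range m n : forall i x, 0 < i <= n -> 0 < kap m i n x <= n.
Proof.
elim: n => [|n IH] i x /=; first by lia.
case: ifP => hn hi; first by [].
case: eqP => [_|hin]; first by lia.
have hi' : 0 < i <= n by lia.
case: (x n.+1).
- have := IH i (swapc (n.+1 - m.+1) n (flipc n.+1 x)) hi'.
  rewrite /sw; case: ifP => /eqP h1; [|case: ifP => /eqP h2]; lia.
- have := IH i x hi'; lia.
Qed.

Lemma piH_kap m n : forall i x t, 0 < i <= n -> 1 <= m ->
  piH m i n x t = flipc (kap m i n x) x t.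
Proof.
elim: n => [|n IH] i x t /= hi hm; first by [].
case: ifP => hn; first by [].
case: eqP => [_|hin]; first by [].
have hi' : 0 < i <= n by lia.
case hx: (x n.+1); last by rewrite IH.
set k := n.+1 - m.+1.
have hk : 0 < k < n by rewrite /k; lia.
have hr := kap_range m n i (swapc k n (flipc n.+1 x)) hi'.
rewrite /flipc /swapc !IH //.
move: (kap m i n _) hr => K hr.
rewrite /flipc /swapc /sw.
repeat (case: eqP => //=); try lia; move=> *; subst; by rewrite ?hx.
Qed.

Lemma kap_ext m n : forall i x y, (forall t, 0 < t <= n -> x t = y t) ->
  kap m i n x = kap m i n y.
Proof.
elim: n => [|n IH] i x y /= hxy; first by [].
case: ifP => hn; first by [].
case: eqP => [_|hin]; first by [].
rewrite -hxy; last by lia.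
case: (x n.+1); last by apply: IH => t ht; apply: hxy; lia.
congr sw; apply: IH => t ht; rewrite /swapc /flipc.
repeat (case: eqP => //=); move=> *; try congr negb; apply: hxy; lia.
Qed.

Lemma sw_inj a b : injective (sw a b).
Proof. move=> u v; rewrite /sw; repeat (case: eqP => //=); lia. Qed.

Lemma kap_self m n x : 0 < n -> kap m n n x = n.
Proof. by case: n => [|n] //= _; case: ifP => //; rewrite eqxx. Qed.

Lemma kap_base m n i x : n <= m.+1 -> kap m i n x = i.
Proof. by case: n => [|n] //= ->. Qed.

Lemma kap_step m n i x : m < n -> i != n.+1 ->
  kap m i n.+1 x = if x n.+1 then sw (n - m) n (kap m i n (swapc (n - m) n (flipc n.+1 x)))
                   else kap m i n x.
Proof.
move=> hn hi /=. rewrite ifF; last by lia.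
by rewrite (negbTE hi) subSS.
Qed.

Lemma kap_lt m n i x : 0 < i <= n -> 0 < kap m i n.+1 x <= n.
Proof.
move=> hi; case: (leqP n.+1 m.+1) => hn; first by rewrite kap_base.
rewrite kap_step //; last by lia.
case: (x n.+1); last exact: kap_range.
have := kap_range m n i (swapc (n - m) n (flipc n.+1 x)) hi.
rewrite /sw; case: ifP => /eqP h1; [|case: ifP => /eqP h2]; lia.
Qed.

Lemma kap_inj m n : forall i j x, 0 < i <= n -> 0 < j <= n ->
  kap m i n x = kap m j n x -> i = j.
Proof.
elim: n => [|n IH] i j x hi hj; first by lia.
case: (leqP n.+1 m.+1) => hn.
  by rewrite !kap_base.
case: (eqVneq i n.+1) => [->|hi1]; case: (eqVneq j n.+1) => [->|hj1] //.
- rewrite kap_self // => h.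
  have := kap_lt m n j x (_ : 0 < j <= n); rewrite -h; lia.
- rewrite kap_self // => h.
  have := kap_lt m n i x (_ : 0 < i <= n); rewrite h; lia.
rewrite !kap_step //; try lia.
have hi' : 0 < i <= n by lia.
have hj' : 0 < j <= n by lia.
by case: (x n.+1) => [/sw_inj|]; apply: IH.
Qed.

Lemma kap_fix m n i x : 0 < i <= m -> n <= m + i -> kap m i n x = i.
Proof.
elim: n x => [|n IH] x hi hn; first by [].
case: (leqP n.+1 m.+1) => hn'; first by rewrite kap_base.
rewrite kap_step //; try lia.
rewrite !IH //; try lia.
case: (x n.+1) => //; rewrite /sw; case: ifP => /eqP h1; [|case: ifP => /eqP h2]; lia.
Qed.

Definition sq m n a b c d := forall x,
  [/\ kap m a n x != kap m c n x,
      kap m d n (flipc (kap m c n x) x) = kap m a n x &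
      kap m b n (flipc (kap m a n x) x) = kap m c n x].

Lemma sq_lift m n a b c d : m < n -> 0 < a <= n -> 0 < b <= n -> 0 < c <= n -> 0 < d <= n ->
  sq m n a b c d -> sq m n.+1 a b c d.
Proof.
move=> hn ha hb hc hd IH x.
have ne i : 0 < i <= n -> i != n.+1 by lia.
rewrite !kap_step ?ne //.
have fl y K : 0 < K <= n -> flipc K y n.+1 = y n.+1.
  by move=> hK; rewrite /flipc ifF //; apply/eqP; lia.
case hx: (x n.+1).
- set y := swapc (n - m) n (flipc n.+1 x).
  have [h1 h2 h3] := IH y.
  have hsw K : 0 < K <= n -> 0 < sw (n - m) n K <= n.
    by rewrite /sw; case: ifP => /eqP e1; [|case: ifP => /eqP e2]; lia.
  have key K : 0 < K <= n -> forall t, 0 < t <= n ->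
     swapc (n - m) n (flipc n.+1 (flipc (sw (n - m) n K) x)) t = flipc K y t.
    move=> hK t ht; rewrite /y /swapc /flipc /sw.
    repeat (case: eqP => //=); lia.
  rewrite !fl ?hx ?hsw //; try exact: kap_range.
  split.
  + by apply: contra h1 => /eqP /sw_inj ->.
  + by rewrite (kap_ext m n d _ _ (key _ (kap_range m n c y hc))) h2.
  + by rewrite (kap_ext m n b _ _ (key _ (kap_range m n a y ha))) h3.
- have [h1 h2 h3] := IH x.
  by rewrite !fl ?hx ?h2 ?h3 //; exact: kap_range.
Qed.

Lemma sq_comm m n j : 0 < j <= m -> m < n -> sq m n j j.+1 j.+1 j.
Proof.
move=> hj; elim: n => [|n IH] hn; first by [].
case: (leqP n.+1 m.+1) => hn'.
  move=> x; rewrite !kap_base //; split => //; lia.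
apply: sq_lift; try lia; apply: IH; lia.
Qed.

Lemma sq_conj m n j : 0 < j <= m -> m + j < n ->
  sq m n j (m + j).+1 (m + j).+1 (m + j).
Proof.
move=> hj; elim: n => [|n IH] hn; first by [].
case: (ltnP (m + j) n) => hn'.
  apply: sq_lift; try lia; apply: IH; lia.
have -> : n = m + j by lia.
move=> x.
have hne : j != (m + j).+1 by lia.
have hne' : m + j != (m + j).+1 by lia.
rewrite !kap_self //; split.
- apply/eqP => h; have := kap_inj m (m+j).+1 j (m+j).+1 x (_ : 0 < j <= (m+j).+1) (_ : 0 < (m+j).+1 <= (m+j).+1); rewrite h kap_self //; lia.
- rewrite !kap_step //; try lia.
  have -> : m + j - m = j by lia.
  rewrite /flipc eqxx.
  case: (x (m + j).+1) => /=.
  + rewrite kap_self ?kap_fix //; try lia.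
    by rewrite /sw eqxx.
  + rewrite kap_self ?kap_fix //; try lia.
    by rewrite /sw ifF ?eqxx //; apply/eqP; lia.
- by [].
Qed.

Set Implicit Arguments. Unset Strict Implicit.

Definition Kc m (v : Hpt m) (i : 'I_(2 * m).+1) : nat := kap m i.+1 (2 * m).+1 (ext_pt v).
Definition Ko m (v : Hpt m) (i : 'I_(2 * m).+1) : 'I_(2 * m).+1 := inord (Kc v i).-1.
Definition flipo m (o : 'I_(2 * m).+1) (v : Hpt m) : Hpt m :=
  [ffun o' => if o' == o then ~~ v o' else v o'].

Lemma Kc_range m v i : 0 < @Kc m v i <= (2 * m).+1.
Proof. apply: kap_range; have := ltn_ord i; lia. Qed.

Lemma Kc_Ko m v i : @Kc m v i = (Ko v i).+1.
Proof. move: (Kc_range v i) => h; rewrite /Ko inordK; lia. Qed.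

Lemma ext_val m (v : Hpt m) o : ext_pt v (val o).+1 = v o.
Proof. by rewrite /ext_pt valK. Qed.

Lemma ext_flip m (v : Hpt m) o t : ext_pt (flipo o v) t = flipc (val o).+1 (ext_pt v) t.
Proof.
rewrite /ext_pt /flipc; case: t => [|t] //=.
case: insubP => [o' _ eo|hn].
  by rewrite ffunE eqSS -eo val_eqE.
by rewrite ifF //; apply/eqP => [[e]]; move: hn; rewrite e ltn_ord.
Qed.

Lemma act_flip m (hm : 1 <= m) i (v : Hpt m) : act i v = flipo (Ko v i) v.
Proof.
apply/ffunP => o; rewrite !ffunE piH_kap //; last by have := ltn_ord i; lia.
by rewrite /flipc ext_val -/(Kc v i) Kc_Ko eqSS val_eqE.
Qed.

Lemma Ko_inj m (v : Hpt m) : injective (Ko v).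
Proof.
move=> i j e; have : Kc v i = Kc v j by rewrite !Kc_Ko e.
move/kap_inj => h; apply: val_inj; apply/eqP; rewrite -eqSS; apply/eqP; apply: h;
  have := ltn_ord i; have := ltn_ord j; lia.
Qed.

Lemma Kc_flip m (v : Hpt m) o i : Kc (flipo o v) i = kap m i.+1 (2 * m).+1 (flipc (val o).+1 (ext_pt v)).
Proof. by apply: kap_ext => t _; rewrite ext_flip. Qed.

Lemma sq_ord m (v : Hpt m) (a b c d : 'I_(2 * m).+1) :
  sq m (2 * m).+1 a.+1 b.+1 c.+1 d.+1 ->
  [/\ Ko v a != Ko v c, Ko (flipo (Ko v c) v) d = Ko v a & Ko (flipo (Ko v a) v) b = Ko v c].
Proof.
move=> /(_ (ext_pt v)) [h1 h2 h3]; split.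
- by apply: contra h1 => /eqP e; rewrite -/(Kc v a) -/(Kc v c) !Kc_Ko e.
- by rewrite {1}/Ko Kc_flip -Kc_Ko h2.
- by rewrite {1}/Ko Kc_flip -Kc_Ko h3.
Qed.

Lemma gen_val m k : 0 < k <= (2 * m).+1 -> gen m k = k.-1 :> nat.
Proof. by move=> h; rewrite /gen inordK; lia. Qed.

Lemma rel_sq m (hm : 1 <= m) (r : bool * 'I_m) :
  let: (a, b, c, d) := rel_letters r in sq m (2 * m).+1 a.+1 b.+1 c.+1 d.+1.
Proof.
case: r => [[] j]; rewrite /rel_letters /=; have := ltn_ord j => hj; rewrite !gen_val; try lia.
- have -> : (m + j.+1 + 1).-1.+1 = (m + j.+1).+1 by lia.
  have -> : (m + j.+1).-1.+1 = (m + j.+1) by lia.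
  apply: sq_conj; lia.
- apply: sq_comm; lia.
Qed.

Definition cell m (S : {set 'I_(2 * m).+1}) (w : Hpt m) : Tcell (2 * m).+1 :=
  [ffun k => (k \in S, w k)].

Lemma cell_surj m (d : Tcell (2 * m).+1) : exists T (w : Hpt m), d = cell T w.
Proof.
exists [set k | (d k).1], [ffun k => (d k).2].
by apply/ffunP => k; rewrite !ffunE inE; case: (d k).
Qed.

Lemma cell_inj m S S' (w w' : Hpt m) : cell S w = cell S' w' -> S = S' /\ w = w'.
Proof.
move=> e; split; [apply/setP => k | apply/ffunP => k];
  by have := congr1 (fun f : Tcell (2 * m).+1 => f k) e; rewrite !ffunE => -[].
Qed.

Lemma cdim_cell m S (w : Hpt m) : cdim (cell S w) = #|S|.
Proof. by rewrite /cdim; apply: eq_card => k; rewrite inE ffunE. Qed.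

Lemma cfaceP m (T : {set 'I_(2 * m).+1}) (w : Hpt m) (S : {set 'I_(2 * m).+1}) (v : Hpt m) :
  reflect (T \subset S /\ forall k, (k \in T) || (k \notin S) -> w k = v k)
          (cface (cell T w) (cell S v)).
Proof.
apply: (iffP forallP) => [H|[sTS H] k].
  split.
    apply/subsetP => k kT; have := H k; rewrite !ffunE /= xpair_eqE kT.
    by case: (k \in S).
  move=> k hk; have := H k; rewrite !ffunE /= xpair_eqE.
  case/orP: hk => hk.
    by rewrite hk /= andbF orbF => /andP [_ /eqP].
  by rewrite (negbTE hk) /= orbF => /andP [_ /eqP].
rewrite !ffunE /= xpair_eqE.
case kT: (k \in T).
  by rewrite (subsetP sTS k kT) H ?kT ?eqxx.
case kS: (k \in S) => //=.
by rewrite H ?kS ?orbT ?eqxx.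
Qed.

Lemma agree_flip m (w v : Hpt m) B : (forall k, k != B -> w k = v k) -> w = v \/ w = flipo B v.
Proof.
move=> H; case: (eqVneq (w B) (v B)) => hB; [left|right]; apply/ffunP => k;
  rewrite ?ffunE; (case: (eqVneq k B) => [->|hk]; [|by rewrite H]) => //.
by move: hB; case: (w B); case: (v B).
Qed.

Lemma flipo_ne m B (v : Hpt m) k : k != B -> flipo B v k = v k.
Proof. by rewrite ffunE => /negbTE ->. Qed.

Lemma edge_cells m A (v : Hpt m) :
  [set d | cface d (cell [set A] v) && (cdim d == 0)] = [set cell set0 v; cell set0 (flipo A v)].
Proof.
apply/setP => d; have [T [w ->]] := cell_surj d.
rewrite !inE cdim_cell cards_eq0.
apply/andP/orP.
- move=> [/cfaceP [_ H] /eqP T0]; subst T.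
  have Hk : forall k, k != A -> w k = v k by move=> k hk; apply: H; rewrite !inE hk orbT.
  by case: (agree_flip Hk) => ->; [left|right].
- case=> /eqP e; have [-> ->] := cell_inj e; split => //; apply/cfaceP;
    split; rewrite ?sub0set // => k; rewrite !inE // => hk; rewrite flipo_ne //.
Qed.

Lemma face_cells m A C (v : Hpt m) : A != C ->
  [set d | cface d (cell [set A; C] v) && (cdim d == 1)] =
  [set cell [set A] v; cell [set C] (flipo A v); cell [set C] v; cell [set A] (flipo C v)].
Proof.
move=> hAC; apply/setP => d; have [T [w ->]] := cell_surj d.
rewrite !inE cdim_cell.
apply/andP/idP.
- move=> [/cfaceP [sT H] /cards1P [t Tt]]; subst T.
  have := subsetP sT t (set11 t); rewrite !inE => /orP [] /eqP Et; rewrite Et {Et} in H *.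
  + have Hk : forall k, k != C -> w k = v k.
      by move=> k hk; apply: H; rewrite !inE (negbTE hk) orbF; case: (k == A).
    by case: (agree_flip Hk) => ->; rewrite !eqxx ?orbT.
  + have Hk : forall k, k != A -> w k = v k.
      by move=> k hk; apply: H; rewrite !inE (negbTE hk) /= orbN.
    by case: (agree_flip Hk) => ->; rewrite !eqxx ?orbT.
- have hCA : C != A by rewrite eq_sym.
  move=> /orP [/orP [/orP [|]|]|] /eqP e; have [-> ->] := cell_inj e;
  (split; last by rewrite cards1);
  apply/cfaceP; (split; first by rewrite sub1set !inE eqxx ?orbT);
  move=> k; rewrite !inE => hk; rewrite ?flipo_ne //;
  by apply/eqP => ek; move: hk; rewrite ek eqxx ?(negbTE hAC) ?(negbTE hCA) ?orbT.
Qed.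

Definition la m (r : bool * 'I_m) := (rel_letters r).1.1.1.
Definition lb m (r : bool * 'I_m) := (rel_letters r).1.1.2.
Definition lc m (r : bool * 'I_m) := (rel_letters r).1.2.
Definition ld m (r : bool * 'I_m) := (rel_letters r).2.

Lemma rel_lettersE m (r : bool * 'I_m) : rel_letters r = (la r, lb r, lc r, ld r).
Proof. by rewrite /la /lb /lc /ld; case: (rel_letters r) => [[[? ?] ?] ?]. Qed.

Lemma la_val m b (j : 'I_m) : la (b, j) = j :> nat.
Proof. rewrite /la /rel_letters; case: b => /=; rewrite gen_val //; have := ltn_ord j; lia. Qed.

Lemma lc_val m b (j : 'I_m) : lc (b, j) = (if b then m + j + 1 else j + 1) :> nat.
Proof. rewrite /lc /rel_letters; case: b => /=; rewrite gen_val //; have := ltn_ord j; lia. Qed.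

Lemma letters_inj m (r r' : bool * 'I_m) : [set la r; lc r] = [set la r'; lc r'] -> r = r'.
Proof.
case: r => b j; case: r' => b' j' E.
have h1 : la (b, j) \in [set la (b', j'); lc (b', j')] by rewrite -E !inE eqxx.
have h2 : lc (b, j) \in [set la (b', j'); lc (b', j')] by rewrite -E !inE eqxx orbT.
have h3 : la (b', j') \in [set la (b, j); lc (b, j)] by rewrite E !inE eqxx.
have h4 : lc (b', j') \in [set la (b, j); lc (b, j)] by rewrite E !inE eqxx orbT.
move: h1 h2 h3 h4; rewrite !inE -!val_eqE /= !la_val !lc_val.
have := ltn_ord j; have := ltn_ord j'; clear E; case: b; case: b' => hj hj' h1 h2 h3 h4; try (congr pair; apply: ord_inj); lia.
Qed.

Theorem proposition6p2 (m : nat) (hm : 1 <= m) :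
  exists (fV : Kvert m -> Tcell (2 * m).+1) (fE : Kedge m -> Tcell (2 * m).+1)
         (fF : Kface m -> Tcell (2 * m).+1),
    cellular_embedding fV fE fF.
Proof.
pose fV := fun v : Kvert m => cell set0 v.
pose fE := fun e : Kedge m => cell [set Ko e.1 e.2] e.1.
pose fF := fun f : Kface m => cell [set Ko f.1 (la f.2); Ko f.1 (lc f.2)] f.1.
have sqf : forall (v : Hpt m) r,
  [/\ Ko v (la r) != Ko v (lc r), Ko (flipo (Ko v (lc r)) v) (ld r) = Ko v (la r)
    & Ko (flipo (Ko v (la r)) v) (lb r) = Ko v (lc r)].
  by move=> v r; apply: sq_ord; have := rel_sq hm r; rewrite rel_lettersE.
exists fV, fE, fF; split.
- split.
  + by move=> v v' /cell_inj [].
  + by move=> [v i] [v' i'] /cell_inj /= [e1 e2]; subst v'; move/set1_inj/Ko_inj: e1 => ->.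
  + move=> [v r] [v' r'] /cell_inj /= [e1 e2]; subst v'.
    have im : forall a c, [set Ko v a; Ko v c] = Ko v @: [set a; c].
      by move=> a c; rewrite imsetU1 imset_set1.
    by move: e1; rewrite !im => /(imset_inj (@Ko_inj m v)) /letters_inj ->.
- split => [v|[v i]|[v r]]; rewrite /fV /fE /fF cdim_cell ?cards0 ?cards1 //.
  by rewrite cards2; case: (sqf v r) => ->.
- move=> [v i]; rewrite /edge_src /edge_tgt /fE /fV /= act_flip //; exact: edge_cells.
- move=> [v r]; rewrite /face_boundary rel_lettersE /=.
  rewrite ?imsetU ?imsetU1 ?imset_set1 /fE /fF /= ?act_flip //.
  case: (sqf v r) => hAC h2 h3; rewrite h2 h3.
  exact: face_cells.
Qed.
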